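(* Let $\mathbf{A}=(A_1,\ldots,A_n)$ be a POVM on $\mathbb{C}^d$ that is $\mathcal{U}$-simulable, where $\mathcal{U}$ is the set of unbiased 2-outcome POVMs on $\mathbb{C}^d$. Then every antipodal operator $\bar A_i$ is positive semidefinite, $\bar{\mathbf{A}}=(\bar A_1,\ldots,\bar A_n)$ is a POVM, and the pair $\{\mathbf{A},\bar{\mathbf{A}}\}$ is jointly measurable.
   Context: A POVM on $\mathbb{C}^d$ with $n$ outcomes is a tuple $\mathbf{A}=(A_1,\ldots,A_n)$ of positive semidefinite operators with $\sum_a A_a=\mathbb{I}$ (some effects may be zero). Given a set $\mathcal{B}=\{\mathbf{B}^{(j)}\}_j$ of POVMs, a POVM $\mathbf{A}$ with $n$ outcomes is $\mathcal{B}$-simulable if there are a probability distribution $p(j)$ over (finitely many) elements of $\mathcal{B}$ and conditional probability distributions $q(i|j,i')$ (over $i\in\{1,\ldots,n\}$, for each $j$ and each outcome $i'$ of $\mathbf{B}^{(j)}$) such that $A_i=\sum_j p(j)\sum_{i'}q(i|j,i')B^{(j)}_{i'}$ for all $i$. Every Hermitian operator on $\mathbb{C}^d$ can be written uniquely as $A=a\mathbb{I}+\vec v\cdot\vec\lambda$ with $a\in\mathbb{R}$, $\vec v\in\mathbb{R}^{d^2-1}$, where $\vec\lambda=(\lambda_1,\ldots,\lambda_{d^2-1})$ is a fixed tuple of traceless Hermitian operators which together with $\mathbb{I}$ form a basis of the real space of Hermitian operators (e.g. Pauli matrices for $d=2$); here $a=\mathrm{Tr}(A)/d$. The antipodal operator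 of $A$ is $\bar A=a\mathbb{I}-\vec v\cdot\vec\lambda=\frac{2\mathrm{Tr}(A)}{d}\mathbb{I}-A$. A 2-outcome POVM is unbiased if it has the form $(\tfrac12\mathbb{I}+\vec v\cdot\vec\lambda,\ \tfrac12\mathbb{I}-\vec v\cdot\vec\lambda)$. A pair of POVMs $\mathbf{A}$ ($n_1$ outcomes), $\mathbf{A}'$ ($n_2$ outcomes) is jointly measurable if there is a POVM $(M_{ab})$ with $\sum_b M_{ab}=A_a$ and $\sum_a M_{ab}=A'_b$ for all $a,b$. *)

(* Defs.v *)
(* Operators on C^d are d x d matrices over an arbitrary
   numeric algebraically closed field C (e.g. algC); this covers the complex case. *)
From HB Require Import structures.
From mathcomp Require Import all_boot all_order all_algebra.
Set Implicit Arguments. Unset Strict Implicit. Unset Printing Implicit Defensive.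
Import Order.TTheory GRing.Theory Num.Theory.
Local Open Scope ring_scope.

Definition adjmx (C : numClosedFieldType) (m n : nat) (A : 'M[C]_(m, n))
  : 'M[C]_(n, m) := (map_mx Num.conj A)^T.

Definition hermitian (C : numClosedFieldType) (d : nat) (A : 'M[C]_d) : Prop :=
  adjmx A = A.

Definition psd (C : numClosedFieldType) (d : nat) (A : 'M[C]_d) : Prop :=
  hermitian A /\ forall v : 'cV[C]_d, 0 <= (adjmx v *m A *m v) 0 0.

Definition is_povm (C : numClosedFieldType) (d k : nat) (A : 'I_k -> 'M[C]_d)
  : Prop :=
  (forall a, psd (A a)) /\ \sum_(a < k) A a = 1%:M.

(* unbiased 2-outcome POVM: (1/2 I + X, 1/2 I - X) with X = v.lambda, i.e.
   X an arbitrary traceless Hermitian operator *)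
Definition unbiased (C : numClosedFieldType) (d : nat) (B : 'I_2 -> 'M[C]_d)
  : Prop :=
  is_povm B /\
  exists X : 'M[C]_d, hermitian X /\ \tr X = 0 /\
    B ord0 = (2^-1)%:M + X /\ B ord_max = (2^-1)%:M - X.

Definition simulable (C : numClosedFieldType) (d k : nat)
  (S : ('I_k -> 'M[C]_d) -> Prop) (n : nat) (A : 'I_n -> 'M[C]_d) : Prop :=
  exists (m : nat) (p : 'I_m -> C) (B : 'I_m -> 'I_k -> 'M[C]_d)
         (q : 'I_m -> 'I_k -> 'I_n -> C),
    (forall j, S (B j)) /\
    (forall j, 0 <= p j) /\ \sum_(j < m) p j = 1 /\
    (forall j i' i, 0 <= q j i' i) /\
    (forall j i', \sum_(i < n) q j i' i = 1) /\
    (forall i, A i = \sum_(j < m) p j *: \sum_(i' < k) q j i' i *: B j i').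

Definition antipodal (C : numClosedFieldType) (d : nat) (A : 'M[C]_d)
  : 'M[C]_d := (2 * \tr A / d%:R)%:M - A.

Definition jointly_measurable (C : numClosedFieldType) (d n1 n2 : nat)
  (A : 'I_n1 -> 'M[C]_d) (A' : 'I_n2 -> 'M[C]_d) : Prop :=
  exists M : 'I_n1 -> 'I_n2 -> 'M[C]_d,
    (forall a b, psd (M a b)) /\
    \sum_(a < n1) \sum_(b < n2) M a b = 1%:M /\
    (forall a, \sum_(b < n2) M a b = A a) /\
    (forall b, \sum_(a < n1) M a b = A' b).

(* Main.v *)
Require Import Defs.
From HB Require Import structures.
From mathcomp Require Import all_boot all_order all_algebra.
From mathcomp Require Import ring.
Import Order.TTheory GRing.Theory Num.Theory.
Local Open Scope ring_scope.

Set Implicit Arguments.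
Section H.
Variables (C : numClosedFieldType) (d : nat).
Implicit Types (A B : 'M[C]_d).

Lemma hermE A : (Defs.hermitian A) -> forall i j, Num.conj (A j i) = A i j.
Proof. by move=> h i j; have := congr1 (fun M : 'M[C]_d => M i j) h; rewrite !mxE. Qed.

Lemma psd0 : Defs.psd (0 : 'M[C]_d).
Proof.
split; first by apply/matrixP=> i j; rewrite !mxE (rmorph0 Num.conj_op).
by move=> v; rewrite mulmx0 mul0mx mxE.
Qed.

Lemma psdD A B : psd A -> psd B -> Defs.psd (A + B).
Proof.
move=> [hA fA] [hB fB]; split.
  apply/matrixP=> i j; rewrite !mxE (rmorphD Num.conj_op); congr (_ + _); exact: hermE.
by move=> v; rewrite mulmxDr mulmxDl mxE addr_ge0.
Qed.

Lemma psdZ (c : C) A : 0 <= c -> psd A -> Defs.psd (c *: A).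
Proof.
move=> c0 [hA fA]; split.
  by apply/matrixP=> i j; rewrite !mxE (rmorphM Num.conj_op); congr (_ * _); [exact: geC0_conj | exact: hermE].
by move=> v; rewrite -scalemxAr -scalemxAl mxE mulr_ge0.
Qed.

Lemma psd_sum (I : finType) (F : I -> 'M[C]_d) : (forall i, Defs.psd (F i)) -> Defs.psd (\sum_i F i).
Proof. move=> H; apply: (big_ind (@Defs.psd C d)) => //; [exact: psd0 | exact: psdD]. Qed.

Lemma antipodalD A B : antipodal (A + B) = antipodal A + antipodal B.
Proof. by rewrite /antipodal mxtraceD mulrDr mulrDl raddfD /= opprD addrACA. Qed.

Lemma antipodal0 : antipodal (0 : 'M[C]_d) = 0.
Proof. by rewrite /antipodal mxtrace0 mulr0 mul0r subr0; apply/matrixP=> i j; rewrite !mxE mul0rn. Qed.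

Lemma antipodalZ (c : C) A : antipodal (c *: A) = c *: antipodal A.
Proof. by rewrite /antipodal mxtraceZ scalerBr scale_scalar_mx mulrCA !mulrA. Qed.

Lemma antipodal_sum (I : finType) (F : I -> 'M[C]_d) :
  antipodal (\sum_i F i) = \sum_i antipodal (F i).
Proof. exact: (big_morph _ antipodalD antipodal0). Qed.

Lemma antipodal1 : (0 < d)%N -> antipodal (1%:M : 'M[C]_d) = 1%:M.
Proof.
move=> hd; rewrite /antipodal. rewrite mxtrace_scalar -mulrA mulfV ?pnatr_eq0 -?lt0n // mulr1.
by rewrite -[2]/(1 + 1) raddfD /= addrK.
Qed.

Lemma antipodal_half (X : 'M[C]_d) : (0 < d)%N -> \tr X = 0 ->
  antipodal ((2^-1)%:M + X) = (2^-1)%:M - X.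
Proof.
move=> hd tX; rewrite /antipodal mxtraceD mxtrace_scalar tX addr0.
have h2 : (2 : C) != 0 by rewrite pnatr_eq0.
have hd' : (d%:R : C) != 0 by rewrite pnatr_eq0 -lt0n.
rewrite -(mulr_natr (2^-1 : C) d) mulrA mulfV // mul1r mulfV //.
apply/matrixP=> i j; rewrite !mxE; case: (i == j) => /=; last by rewrite ?mulr0n; ring.
by field.
Qed.

Lemma antipodal_unb (B : 'I_2 -> 'M[C]_d) : (0 < d)%N -> unbiased B ->
  forall i, antipodal (B i) = B (rev_ord i).
Proof.
move=> hd [_ [X [_ [tX [h0 h1]]]]] i.
have e0 : rev_ord (ord0 : 'I_2) = ord_max by apply/val_inj.
have e1 : rev_ord (ord_max : 'I_2) = ord0 by apply/val_inj.
have [->|->] : i = ord0 \/ i = ord_max.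
  by case: i => [[|[|//]]] Hi; [left|right]; apply/val_inj.
  by rewrite e0 h0 h1 antipodal_half.
rewrite e1 h1 h0 (@antipodal_half (- X)) ?opprK //.
by rewrite linearN /= tX oppr0.
Qed.
End H.
Unset Implicit Arguments.

Theorem proposition3 (C : numClosedFieldType) (d : nat) (hd : (0 < d)%N)
  (n : nat) (A : 'I_n -> 'M[C]_d) :
  is_povm A -> simulable (@unbiased C d) A ->
  (forall i, psd (antipodal (A i))) /\
  is_povm (fun i => antipodal (A i)) /\
  jointly_measurable A (fun i => antipodal (A i)).
Proof.
move=> hA [m [p [B [q [hB [hp [hp1 [hq [hq1 hAe]]]]]]]]].
have anti : forall i, antipodal (A i) =
    \sum_j p j *: \sum_i' q j i' i *: B j (rev_ord i').
  move=> i; rewrite hAe antipodal_sum; apply: eq_bigr => j _.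
  rewrite antipodalZ antipodal_sum; congr (_ *: _); apply: eq_bigr => i' _.
  by rewrite antipodalZ (antipodal_unb hd (hB j)).
have psdA' : forall i, psd (antipodal (A i)).
  move=> i; rewrite anti; apply: psd_sum => j; apply: psdZ => //.
  apply: psd_sum => i'; apply: psdZ => //; exact: (hB j).1.1 (rev_ord i').
have sumA' : \sum_i antipodal (A i) = 1%:M.
  by rewrite -antipodal_sum hA.2 antipodal1.
split; first done.
split; first by split.
set M := fun a b => \sum_j p j *: \sum_i' (q j i' a * q j (rev_ord i') b) *: B j i'.
have rowS : forall a, \sum_b M a b = A a.
  move=> a; rewrite hAe exchange_big /=; apply: eq_bigr => j _.
  rewrite -scaler_sumr exchange_big /=; congr (_ *: _); apply: eq_bigr => i' _.
  by rewrite -scaler_suml -mulr_sumr hq1 mulr1.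
have colS : forall b, \sum_a M a b = antipodal (A b).
  move=> b; rewrite anti exchange_big /=; apply: eq_bigr => j _.
  rewrite -scaler_sumr exchange_big /=; congr (_ *: _).
  rewrite (reindex_inj rev_ord_inj) /=; apply: eq_bigr => i' _.
  by rewrite -scaler_suml -mulr_suml hq1 mul1r rev_ordK.
exists M; split.
  move=> a b; apply: psd_sum => j; apply: psdZ => //.
  apply: psd_sum => i'; apply: psdZ; first exact: mulr_ge0.
  exact: (hB j).1.1 i'.
split; last by split.
by rewrite -hA.2; apply: eq_bigr => a _; exact: rowS.
Qed.
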